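(* Let $\mathfrak L=\mathbb V\oplus\mathbb W$ be a color gLt-algebra admitting a quasi-multiplicative basis $\mathfrak B=\{e_i\}_{i\in I}$ of $\mathbb W\neq 0$. For any $i\in I$, the linear subspace $\mathfrak J_{[i]}=\mathbb V_{[i]}\oplus\mathbb W_{[i]}$ is a color gLt-ideal of $\mathfrak L$ admitting a quasi-multiplicative basis inherited by the one of $\mathfrak L$.
   Context: Let $\mathbb F$ be a field, $\mathbb G$ an abelian group, $n\ge 2$, and $\epsilon:\mathbb G\times\mathbb G\to\mathbb F\setminus\{0\}$ a bicharacter ($\epsilon(k,g+h)=\epsilon(k,g)\epsilon(k,h)$, $\epsilon(g+h,k)=\epsilon(g,k)\epsilon(h,k)$, $\epsilon(g,h)\epsilon(h,g)=1$). A graded $n$-ary algebra is a $\mathbb G$-graded vector space $\mathfrak L=\bigoplus_{g\in\mathbb G}\mathfrak L_g$ with an $n$-linear map $\langle\cdot,\dots,\cdot\rangle:\mathfrak L^n\to\mathfrak L$ such that $\langle\mathfrak L_{g_1},\dots,\mathfrak L_{g_n}\rangle\subset\mathfrak L_{g_1+\dots+g_n}$. For $\sigma\in\mathbb S_n$ write $\langle x_1,\dots,x_n\rangle_\sigma:=\langle x_{\sigma(1)},\dots,x_{\sigma(n)}\rangle$; for subsets $A_1,\dots,A_n$, $\langle A_1,\dots,A_n\rangle_\sigma$ denotes the linear span of all $\langle x_1,\dots,x_n\rangle_\sigma$ with $x_r\in A_r$. A color gLt-algebra is a graded $n$-ary algebra satisfying, for each $k=1,\dots,n$ and fixed scalars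 $\alpha^{\sigma_1,\sigma_2}_{i,j,k}\in\mathbb F$, the color version (each term on the right multiplied by the product of values of $\epsilon$ on the degrees of the homogeneous arguments transposed in passing from the left-hand order to the order of that term) of the identity $\langle y_1,\dots,y_{k-1},\langle x_1,\dots,x_n\rangle,y_k,\dots,y_{n-1}\rangle=\sum_{1\le i,j\le n,\,\sigma_1\in\mathbb S_n,\,\sigma_2\in\mathbb S_{n-1}}\alpha^{\sigma_1,\sigma_2}_{i,j,k}\langle x_{\sigma_1(1)},\dots,x_{\sigma_1(i-1)},\langle y_{\sigma_2(1)},\dots,y_{\sigma_2(j-1)},x_{\sigma_1(i)},y_{\sigma_2(j)},\dots,y_{\sigma_2(n-1)}\rangle,x_{\sigma_1(i+1)},\dots,x_{\sigma_1(n)}\rangle$. A $\mathbb G$-graded subspace $\mathcal I\subset\mathfrak L$ is a color gLt-ideal if $\langle\mathcal I,\mathfrak L,\dots,\mathfrak L\rangle_\sigma\subset\mathcal I$ for every $\sigma\in\mathbb S_n$. $\mathfrak L$ admits a quasi-multiplicative basis if $\mathfrak L=\mathbb V\oplus\mathbb W$ with $\mathbb V$, $\mathbb W\ne0$ graded subspaces and $\mathfrak B=\{e_i\}_{i\in I}$ a basis of homogeneous elements of $\mathbb W$ such that: (1) for $i_1,\dots,i_n\in I$, either $\langle e_{i_1},\dots,e_{i_n}\rangle\in\mathbb Fe_j$ for some $j\in I$ or $\langle e_{i_1},\dots,e_{i_n}\rangle\in\mathbb V$; (2) for $0<k<n$, $i_1,\dots,i_k\in I$ and $\sigma\in\mathbb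 S_n$, $\langle e_{i_1},\dots,e_{i_k},\mathbb V,\dots,\mathbb V\rangle_\sigma\subset\mathbb Fe_{j_\sigma}$ for some $j_\sigma\in I$; (3) either $\langle\mathbb V,\dots,\mathbb V\rangle\subset\mathbb Fe_j$ for some $j\in I$ or $\langle\mathbb V,\dots,\mathbb V\rangle\subset\mathbb V$. A graded subalgebra (or ideal) $\mathfrak S$ has a quasi-multiplicative basis inherited by the one of $\mathfrak L$ if $\mathfrak S=\mathbb V_{\mathfrak S}\oplus\mathbb W_{\mathfrak S}$ with $\mathbb V_{\mathfrak S}$ a graded subspace of $\mathbb V$ and $0\ne\mathbb W_{\mathfrak S}$ a graded subspace of $\mathbb W$ admitting a subset $\mathfrak B'\subset\mathfrak B$ as a basis. Index maps: let $v$ be a symbol not in $I$, $\mathfrak I:=I\,\dot\cup\,\{v\}$; for each $j\in\mathfrak I$ take a new symbol $\overline j$, $\overline I:=\{\overline i:i\in I\}$, $\overline{\mathfrak I}:=\overline I\,\dot\cup\,\{\overline v\}$; set $\overline{(\overline j)}:=j$, $\overline J:=\{\overline j:j\in J\}$ for a set $J$ of symbols ($\overline\emptyset=\emptyset$). Put $u_j:=e_j$ for $j\in I$ and $u_v:=\mathbb V$. For $\sigma\in\mathbb S_n$ and $(j_1,\dots,j_n)\in\mathfrak I^n$ let $a_\sigma(j_1,\dots,j_n)=\{r\}$ if $r\in I$ and $0\ne\langle u_{j_1},\dots,u_{j_n}\rangle_\sigma\subset\mathbb Fe_r$, $=\{v\}$ if $0\ne\langle u_{j_1},\dots,u_{j_n}\rangle_\sigma\subset\mathbb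 V$, and $=\emptyset$ otherwise. For $j,j_2,\dots,j_n\in\mathfrak I$ let $b_\sigma(j,\overline j_2,\dots,\overline j_n):=\{x\in\mathfrak I: a_\sigma(x,j_2,\dots,j_n)=\{j\}\}$. Define $\mu$ on $(\mathfrak I\,\dot\cup\,\overline{\mathfrak I})\times(\mathfrak I^{n-1}\,\dot\cup\,\overline{\mathfrak I}^{n-1})$ with values subsets of $\mathfrak I$ by: $\mu(j,j_1,\dots,j_{n-1})=\bigcup_{\sigma\in\mathbb S_n}a_\sigma(j,j_1,\dots,j_{n-1})$ for $j,j_1,\dots,j_{n-1}\in\mathfrak I$; $\mu(j,\overline j_1,\dots,\overline j_{n-1})=\bigcup_{\sigma\in\mathbb S_n}b_\sigma(j,\overline j_1,\dots,\overline j_{n-1})$ for $j,j_1,\dots,j_{n-1}\in\mathfrak I$; $\mu(\overline j,j_1,\dots,j_{n-1})=\bigcup_{1\le k\le n-1,\ \sigma\in\mathbb S_n}b_\sigma(j_k,\overline j,\overline j_1,\dots,\overline j_{k-1},\overline j_{k+1},\dots,\overline j_{n-1})$ for $j,j_1,\dots,j_{n-1}\in\mathfrak I$; and $\mu(\overline j,\overline j_1,\dots,\overline j_{n-1})=\emptyset$. Define $\phi$ on pairs $(J,X)$ with $J\subset I\,\dot\cup\,\overline I$ and $X\in\mathfrak I^{n-1}\,\dot\cup\,\overline{\mathfrak I}^{n-1}$ by $\phi(\emptyset,X)=\emptyset$ and, for $J\ne\emptyset$, $\phi(J,X):=K\cup\overline K$ where $K:=\big(\bigcup_{j\in J}\mu(j,X)\big)\setminus\{v\}$.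 Connections: for distinct $i,j\in I$, $i$ is connected to $j$ if there exist $t\ge1$, $X_1,\dots,X_t\in\mathfrak I^{n-1}\,\dot\cup\,\overline{\mathfrak I}^{n-1}$ and $\widetilde i\in\{i,\overline i\}$ such that $\phi(\{\widetilde i\},X_1)\ne\emptyset$, …, $\phi(\cdots\phi(\{\widetilde i\},X_1)\cdots,X_{t-1})\ne\emptyset$, and $j\in\phi(\cdots\phi(\phi(\{\widetilde i\},X_1),X_2)\cdots,X_t)$; every $i$ is connected to itself. Being connected is an equivalence relation $\sim$ on $I$; $[i]$ denotes the class of $i$. Define $\mathbb V_{[i]}:=\big(\sum_{i_1,\dots,i_n\in[i]}\mathbb F\langle e_{i_1},\dots,e_{i_n}\rangle\big)\cap\mathbb V$, $\mathbb W_{[i]}:=\bigoplus_{j\in[i]}\mathbb Fe_j$, and $\mathfrak J_{[i]}:=\mathbb V_{[i]}\oplus\mathbb W_{[i]}$. *)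

(* Defs.v *)
From HB Require Import structures.
From mathcomp Require Import all_boot all_fingroup all_algebra.
Set Implicit Arguments. Unset Strict Implicit. Unset Printing Implicit Defensive.
Import GRing.Theory.
Local Open Scope ring_scope.

Definition tup (n : nat) (T : Type) (f : nat -> T) : 'I_n -> T :=
  fun p => f (nat_of_ord p).
Definition extn (T : Type) (m : nat) (d : T) (f : 'I_m -> T) : nat -> T :=
  fun t => if (insub t : option 'I_m) is Some s then f s else d.
Definition insn (T : Type) (k : nat) (z : T) (f : nat -> T) : nat -> T :=
  fun t => if (t < k)%N then f t else if t == k then z else f t.-1.
Definition deln (T : Type) (k : nat) (f : nat -> T) : nat -> T :=
  fun t => if (t < k)%N then f t else f t.+1.
Definition ncons (T : Type) (x : T) (f : nat -> T) : nat -> T :=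
  fun t => if t is t'.+1 then f t' else x.

Section Defs.
Variables (F : fieldType) (G : zmodType) (L : lmodType F).

Definition bicharacter (eps : G -> G -> F) :=
  (forall g h, eps g h != 0) /\
  (forall k g h, eps k (g + h) = eps k g * eps k h) /\
  (forall g h k, eps (g + h) k = eps g k * eps h k) /\
  (forall g h, eps g h * eps h g = 1).

Definition subspace (S : L -> Prop) :=
  S 0 /\ (forall (a : F) x y, S x -> S y -> S (a *: x + y)).

Definition in_span (S : L -> Prop) (x : L) :=
  exists s : seq (F * L), (forall p, p \in s -> S p.2) /\ x = \sum_(p <- s) p.1 *: p.2.

(* Lg g = the homogeneous component L_g; grading: L = (+)_g L_g (direct) *)
Definition grading (Lg : G -> L -> Prop) :=
  (forall g, subspace (Lg g)) /\
  (forall x, exists s : seq (G * L),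
       (forall p, p \in s -> Lg p.1 p.2) /\ x = \sum_(p <- s) p.2) /\
  (forall s : seq (G * L), uniq (map fst s) ->
       (forall p, p \in s -> Lg p.1 p.2) -> \sum_(p <- s) p.2 = 0 ->
       forall p, p \in s -> p.2 = 0).

Definition homogeneous (Lg : G -> L -> Prop) (x : L) := exists g, Lg g x.

Definition graded_subspace (Lg : G -> L -> Prop) (S : L -> Prop) :=
  subspace S /\
  forall x, S x -> exists s : seq (G * L),
     (forall p, p \in s -> Lg p.1 p.2 /\ S p.2) /\ x = \sum_(p <- s) p.2.

Variable n : nat.

Definition multilinear (mu : ('I_n -> L) -> L) :=
  forall (k : 'I_n) (f : 'I_n -> L) (a : F) (u v : L),
    mu (fun p => if p == k then a *: u + v else f p) =
    a *: mu (fun p => if p == k then u else f p) +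
    mu (fun p => if p == k then v else f p).

Definition graded_product (Lg : G -> L -> Prop) (mu : ('I_n -> L) -> L) :=
  forall (g : 'I_n -> G) (x : 'I_n -> L),
    (forall r, Lg (g r) (x r)) -> Lg (\sum_r g r) (mu x).

(* The 2n-1 arguments are tagged
   inl r (= x_{r+1}) and inr s (= y_{s+1}); indices are 0-based, so
   k, i, j : 'I_n stand for the paper's k, i, j minus one.
   posL k a : position of a in the left-hand side
     y_1..y_{k-1}, x_1..x_n, y_k..y_{n-1};
   posT i j s1 s2 a : position of a in the term
     x_{s1(1)}..x_{s1(i-1)}, y_{s2(1)}..y_{s2(j-1)}, x_{s1(i)},
     y_{s2(j)}..y_{s2(n-1)}, x_{s1(i+1)}..x_{s1(n)}.
   The factor is the product of eps(deg a, deg b) over all pairs (a,b)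
   with a before b on the left and b before a in the term. *)
Definition posL (k : 'I_n) (a : 'I_n + 'I_(n.-1)) : nat :=
  match a with
  | inl r => (k + r)%N
  | inr s => if (s < k)%N then nat_of_ord s else (s + n)%N
  end.

Definition posT (i j : 'I_n) (s1 : 'S_n) (s2 : 'S_(n.-1))
    (a : 'I_n + 'I_(n.-1)) : nat :=
  match a with
  | inl r => let q := nat_of_ord ((s1^-1)%g r) in
             if (q < i)%N then q else if q == i then (i + j)%N else (q + n.-1)%N
  | inr s => let q := nat_of_ord ((s2^-1)%g s) in
             if (q < j)%N then (i + q)%N else (i + q).+1
  end.

Definition colfac (eps : G -> G -> F) (dg : 'I_n + 'I_(n.-1) -> G)
    (k i j : 'I_n) (s1 : 'S_n) (s2 : 'S_(n.-1)) : F :=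
  \prod_(a : 'I_n + 'I_(n.-1))
    \prod_(b : 'I_n + 'I_(n.-1) |
            (posL k a < posL k b)%N && (posT i j s1 s2 b < posT i j s1 s2 a)%N)
      eps (dg a) (dg b).

Definition color_gLt_identity (Lg : G -> L -> Prop) (eps : G -> G -> F)
    (mu : ('I_n -> L) -> L)
    (alpha : 'I_n -> 'I_n -> 'I_n -> 'S_n -> 'S_(n.-1) -> F) :=
  forall (k : 'I_n) (gx : 'I_n -> G) (gy : 'I_(n.-1) -> G)
         (x : 'I_n -> L) (y : 'I_(n.-1) -> L),
    (forall r, Lg (gx r) (x r)) -> (forall s, Lg (gy s) (y s)) ->
    let dg a := match a with inl r => gx r | inr s => gy s end in
    mu (tup (insn k (mu x) (extn 0 y))) =
    \sum_(i : 'I_n) \sum_(j : 'I_n) \sum_(s1 : 'S_n) \sum_(s2 : 'S_(n.-1))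
      (alpha i j k s1 s2 * colfac eps dg k i j s1 s2) *:
        mu (tup (insn i (mu (tup (insn j (x (s1 i)) (extn 0 (y \o s2)))))
                          (deln i (extn 0 (x \o s1))))).

Definition color_gLt (Lg : G -> L -> Prop) (eps : G -> G -> F)
    (mu : ('I_n -> L) -> L) :=
  exists alpha, color_gLt_identity Lg eps mu alpha.

Definition prodset (mu : ('I_n -> L) -> L) (A : 'I_n -> L -> Prop) (s : 'S_n) :
    L -> Prop :=
  in_span (fun z => exists x : 'I_n -> L,
                      (forall r, A r (x r)) /\ z = mu (fun p => x (s p))).

Definition gLt_ideal (Lg : G -> L -> Prop) (mu : ('I_n -> L) -> L)
    (S : L -> Prop) :=
  graded_subspace Lg S /\
  forall (s : 'S_n) z,
    prodset mu (fun r => if nat_of_ord r == 0%N then S else (fun _ => True)) s z ->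
    S z.

Variable I : eqType.

Definition line (e : I -> L) (j : I) (z : L) := exists c : F, z = c *: e j.

Definition quasi_mult_basis (Lg : G -> L -> Prop) (mu : ('I_n -> L) -> L)
    (V W : L -> Prop) (e : I -> L) :=
  graded_subspace Lg V /\ graded_subspace Lg W /\
  (forall x, exists v w, V v /\ W w /\ x = v + w) /\
  (forall x, V x -> W x -> x = 0) /\
  (exists x, W x /\ x <> 0) /\
  (forall i, homogeneous Lg (e i)) /\
  (forall x, W x <-> in_span (fun z => exists i, z = e i) x) /\
  (forall s : seq I, uniq s -> forall c : I -> F,
      \sum_(i <- s) c i *: e i = 0 -> forall i, i \in s -> c i = 0) /\
  (forall ix : 'I_n -> I, (exists j, line e j (mu (e \o ix))) \/ V (mu (e \o ix))) /\
  (forall k : nat, (0 < k < n)%N -> forall (ix : 'I_n -> I) (s : 'S_n),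
      exists j, forall z,
        prodset mu (fun r => if (r < k)%N then (fun z => z = e (ix r)) else V) s z ->
        line e j z) /\
  ((exists j, forall z, prodset mu (fun _ => V) 1%g z -> line e j z) \/
   (forall z, prodset mu (fun _ => V) 1%g z -> V z)).

Variables (mu : ('I_n -> L) -> L) (V : L -> Prop) (e : I -> L).

(* the symbol v is None : option I;  u_j *)
Definition uset (j : option I) : L -> Prop :=
  match j with Some i => fun z => z = e i | None => V end.

Definition amap (s : 'S_n) (js : 'I_n -> option I) (t : option I) : Prop :=
  (exists z, prodset mu (fun r => uset (js r)) s z /\ z <> 0) /\
  (forall z, prodset mu (fun r => uset (js r)) s z ->
     match t with Some r => line e r z | None => V z end).

(* x \in b_sigma(j, bar j_2, ..., bar j_n), where rest t = j_{t+2} *)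
Definition bset (s : 'S_n) (j : option I) (rest : nat -> option I) (x : option I) :=
  forall t, amap s (tup (ncons x rest)) t <-> t = j.

(* elements of I-frak \dotcup bar I-frak : (bar?, j) ;
   elements of I-frak^{n-1} \dotcup bar I-frak^{n-1} : (bar?, (j_1..j_{n-1})) *)
Definition Xtype := (bool * ('I_(n.-1) -> option I))%type.

Definition muI (j : bool * option I) (X : Xtype) (x : option I) : Prop :=
  let Xn := extn None X.2 in
  match j.1, X.1 with
  | false, false => exists s, amap s (tup (ncons j.2 Xn)) x
  | false, true => exists s, bset s j.2 Xn x
  | true, false => exists (k : 'I_(n.-1)) s,
                     bset s (X.2 k) (ncons j.2 (deln k Xn)) x
  | true, true => False
  end.

(* phi(J, X) for J \subset I \dotcup bar I, elements (bar?, i) ;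
   phi(J,X) = K \cup bar K, K = (\bigcup_{j in J} mu(j,X)) \ {v}
   (this is automatically empty when J is empty) *)
Definition phi (J : bool * I -> Prop) (X : Xtype) : bool * I -> Prop :=
  fun y => exists j, J j /\ muI (j.1, Some j.2) X (Some y.2).

Definition phis (J : bool * I -> Prop) (Xs : seq Xtype) := foldl phi J Xs.

Definition connected (i j : I) : Prop :=
  i = j \/
  (i <> j /\ exists (b : bool) (Xs : seq Xtype),
     (0 < size Xs)%N /\
     (forall m, (0 < m < size Xs)%N ->
        exists y, phis (fun y => y = (b, i)) (take m Xs) y) /\
     phis (fun y => y = (b, i)) Xs (false, j)).

Definition Vcls (i : I) : L -> Prop :=
  fun x => in_span (fun z => exists ix : 'I_n -> I,
                        (forall r, connected i (ix r)) /\ z = mu (e \o ix)) x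
           /\ V x.

Definition Wcls (i : I) : L -> Prop :=
  in_span (fun z => exists j, connected i j /\ z = e j).

Definition Jcls (i : I) : L -> Prop :=
  fun x => exists v w, Vcls i v /\ Wcls i w /\ x = v + w.

End Defs.

Definition inherited_qmb (F : fieldType) (G : zmodType) (L : lmodType F)
    (I : eqType) (Lg : G -> L -> Prop) (V W : L -> Prop) (e : I -> L)
    (S : L -> Prop) :=
  exists (VS WS : L -> Prop) (P : I -> Prop),
    graded_subspace Lg VS /\ (forall x, VS x -> V x) /\
    graded_subspace Lg WS /\ (forall x, WS x -> W x) /\
    (exists x, WS x /\ x <> 0) /\
    (forall x, WS x <-> in_span (fun z => exists j, P j /\ z = e j) x) /\
    (forall x, S x <-> exists v w, VS v /\ WS w /\ x = v + w) /\
    (forall x, VS x -> WS x -> x = 0).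

(* Main.v *)
Require Import Defs.
From HB Require Import structures.
From mathcomp Require Import all_boot all_fingroup all_algebra.
From Stdlib Require Import ClassicalEpsilon FunctionalExtensionality.
Set Implicit Arguments. Unset Strict Implicit. Unset Printing Implicit Defensive.
Import GRing.Theory.
Local Open Scope ring_scope.

Lemma fchoice (A B : Type) (P : A -> B -> Prop) :
  (forall a, exists b, P a b) -> exists f, forall a, P a (f a).
Proof.
move=> H; exists (fun a => proj1_sig (constructive_indefinite_description _ (H a))).
by move=> a; case: (constructive_indefinite_description _ (H a)).
Qed.

Section Span.
Variables (F : fieldType) (L : lmodType F).
Implicit Types (S T : L -> Prop).

Lemma span_sub S x : S x -> in_span S x.
Proof.
move=> Sx; exists [:: (1, x)]; split; last by rewrite big_seq1 scale1r.
by move=> p; rewrite inE => /eqP ->.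
Qed.

Lemma span_subspace S : subspace (in_span S).
Proof.
split; first by exists [::]; rewrite big_nil.
move=> a x y [s [Hs ->]] [t [Ht ->]].
exists ([seq (a * p.1, p.2) | p <- s] ++ t); split.
  move=> p; rewrite mem_cat => /orP [/mapP [q qs ->]|]; [exact: Hs qs | exact: Ht].
rewrite big_cat big_map scaler_sumr; congr (_ + _).
by apply: eq_bigr => p _; rewrite scalerA.
Qed.

Lemma subspaceD S x y : subspace S -> S x -> S y -> S (x + y).
Proof. by move=> [_ Sl] Sx Sy; have := Sl 1 x y Sx Sy; rewrite scale1r. Qed.

Lemma subspaceZ S a x : subspace S -> S x -> S (a *: x).
Proof. by move=> [S0 Sl] Sx; have := Sl a x 0 Sx S0; rewrite addr0. Qed.

Lemma subspaceB S x y : subspace S -> S x -> S y -> S (x - y).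
Proof.
move=> [S0 Sl] Sx Sy; have := Sl (-1) y x Sy Sx.
by rewrite scaleN1r addrC.
Qed.

Lemma subspace_sum S (T : Type) (r : seq T) (P : pred T) (f : T -> L) :
  subspace S -> (forall t, P t -> S (f t)) -> S (\sum_(t <- r | P t) f t).
Proof.
move=> hS H; apply: big_ind => //; first by case: hS.
by move=> x y; apply: subspaceD.
Qed.

Lemma span_closed S : subspace S -> forall x, in_span S x -> S x.
Proof.
move=> hS x [s [Hs ->]]; rewrite big_seq; apply: subspace_sum => // p ps.
by apply: subspaceZ => //; apply: Hs.
Qed.

Lemma span_mono S T : (forall x, S x -> T x) -> forall x, in_span S x -> in_span T x.
Proof. by move=> ST x [s [Hs ->]]; exists s; split => // p ps; apply: ST; apply: Hs. Qed.

Lemma span_add S x y : in_span S x -> in_span S y -> in_span S (x + y).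
Proof. by apply: subspaceD; apply: span_subspace. Qed.

Lemma subspace_inter S T : subspace S -> subspace T -> subspace (fun x => S x /\ T x).
Proof.
move=> [S0 Sl] [T0 Tl]; split => // a x y [? ?] [? ?]; split; [exact: Sl | exact: Tl].
Qed.

Lemma line_subspace (I : eqType) (e : I -> L) j : subspace (line e j).
Proof.
split; first by exists 0; rewrite scale0r.
by move=> a x y [c ->] [d ->]; exists (a * c + d); rewrite scalerDl scalerA.
Qed.

End Span.

Section ML.
Variables (F : fieldType) (L : lmodType F) (n : nat) (mu : ('I_n -> L) -> L).
Hypothesis Hml : multilinear mu.

Definition upd (w : 'I_n -> L) (k : 'I_n) (u : L) := fun p => if p == k then u else w p.

Lemma upd_id w k : upd w k (w k) = w.
Proof. by apply: functional_extensionality => p; rewrite /upd; case: eqP => // ->. Qed.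

Lemma mu0 w k : mu (upd w k 0) = 0.
Proof.
have := Hml k w 1 0 0; rewrite scaler0 addr0 scale1r -/(upd w k 0) => h.
have : mu (upd w k 0) + mu (upd w k 0) = mu (upd w k 0) + 0 by rewrite addr0 -h.
by move/addrI.
Qed.

Lemma muD w k a u v : mu (upd w k (a *: u + v)) = a *: mu (upd w k u) + mu (upd w k v).
Proof. exact: Hml. Qed.

Lemma muZ w k a u : mu (upd w k (a *: u)) = a *: mu (upd w k u).
Proof. by have := muD w k a u 0; rewrite addr0 mu0 addr0. Qed.

Lemma mu_span_pos (P : L -> Prop) (B : L -> Prop) w k :
  subspace P -> (forall u, B u -> P (mu (upd w k u))) ->
  forall u, in_span B u -> P (mu (upd w k u)).
Proof.
move=> hP H u [s [Hs ->]]; elim: s Hs => [|p s IH] Hs.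
  by rewrite big_nil mu0; case: hP.
rewrite big_cons muD; case: hP => P0 Pl; apply: Pl.
  by apply: H; apply: Hs; rewrite inE eqxx.
by apply: IH => q qs; apply: Hs; rewrite inE qs orbT.
Qed.

Lemma mu_span (P : L -> Prop) (B : 'I_n -> L -> Prop) :
  subspace P -> (forall w, (forall r, B r (w r)) -> P (mu w)) ->
  forall w, (forall r, in_span (B r) (w r)) -> P (mu w).
Proof.
move=> hP H.
suff: forall m, (m <= n)%N -> forall w, (forall r : 'I_n, (r < m)%N -> in_span (B r) (w r)) ->
   (forall r : 'I_n, (m <= r)%N -> B r (w r)) -> P (mu w).
  by move=> Hm w Hw; apply: (Hm n) => // r; rewrite leqNgt ltn_ord.
elim=> [|m IH] hm w Hlt Hge; first by apply: H => r; apply: Hge.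
pose km : 'I_n := Ordinal hm.
rewrite -(upd_id w km); apply: mu_span_pos => //; last by apply: Hlt; rewrite /= ltnSn.
move=> u Bu; apply: IH; first exact: ltnW.
  move=> r hr; rewrite /upd; case: eqP => [E|_]; first by rewrite E /= ltnn in hr.
  by apply: Hlt; apply: ltnW.
move=> r hr; rewrite /upd; case: eqP => [->|ne] //.
apply: Hge; rewrite ltn_neqAle hr andbT; apply/eqP => E; apply: ne; exact: val_inj.
Qed.

End ML.

Section Perm.
Variables (F : fieldType) (L : lmodType F) (n : nat) (mu : ('I_n -> L) -> L).

Lemma prodset_perm (A : 'I_n -> L -> Prop) (s t : 'S_n) z :
  prodset mu A s z -> prodset mu (fun r => A (t r)) (s * t^-1)%g z.
Proof.
apply: span_mono => y [x [Hx ->]]; exists (fun r => x (t r)); split => //.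
by congr mu; apply: functional_extensionality => p; rewrite permM permKV.
Qed.

Lemma prodset_perm_iff (A : 'I_n -> L -> Prop) (t : 'S_n) z :
  prodset mu A 1%g z <-> prodset mu (fun r => A (t r)) (t^-1)%g z.
Proof.
split; first by move/(prodset_perm t); rewrite mul1g.
move/(prodset_perm (t^-1)%g); rewrite invgK mulVg.
have -> : (fun r => A (t ((t^-1)%g r))) = A.
  by apply: functional_extensionality => r; rewrite permKV.
by [].
Qed.

End Perm.

Lemma perm_of_seq n (l : seq 'I_n) : uniq l -> size l = n ->
  exists s : 'S_n, forall p : 'I_n, s p = nth p l p.
Proof.
move=> ul sl.
have inj : injective (fun p : 'I_n => nth p l p).
  move=> p q /= E; apply: val_inj => /=; apply/eqP.
  have hp : (p < size l)%N by rewrite sl ltn_ord.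
  have hq : (q < size l)%N by rewrite sl ltn_ord.
  by rewrite -(nth_uniq p hp hq ul) E (set_nth_default p q hq).
by exists (perm inj) => p; rewrite permE.
Qed.

Section Ord.
Variable T : Type.

Lemma tup_insn_extn_lift n (k : 'I_n) (z d : T) (f : 'I_n -> T) :
  @tup n _ (insn k z (extn d (fun s => f (lift k s)))) =1 fun r => if r == k then z else f r.
Proof.
move=> r; rewrite /tup /insn /extn.
case: (ltnP r k) => Hrk.
  have -> : (r == k) = false by apply/eqP => E; rewrite E ltnn in Hrk.
  case: insubP => [s _ Hs|Hn].
    by congr f; apply: val_inj => /=; rewrite /bump Hs leqNgt Hrk.
  exfalso; move/negP: Hn; apply; rewrite -ltnS prednK; first exact: leq_ltn_trans Hrk (ltn_ord k).
  exact: leq_ltn_trans (leq0n _) (ltn_ord r).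
case: (eqVneq r k) => [->|ne]; first by rewrite !eqxx.
have ne' : (nat_of_ord r == k) = false by apply/negbTE.
rewrite ne'.
have Hlt : (k < r)%N by rewrite ltn_neqAle Hrk andbT eq_sym.
have h0 : (0 < r)%N by exact: leq_ltn_trans (leq0n _) Hlt.
have hn : (0 < n)%N by exact: leq_ltn_trans (leq0n _) (ltn_ord r).
case: insubP => [s _ Hs|Hn].
  congr f; apply: val_inj => /=; rewrite /bump Hs.
  have -> : (k <= r.-1)%N by rewrite -ltnS prednK.
  by rewrite add1n prednK.
exfalso; move/negP: Hn; apply; rewrite -ltnS !prednK //.
Qed.

Lemma tup_insn_deln_extn n (i : 'I_n) (z d : T) (f : 'I_n -> T) :
  @tup n _ (insn i z (deln i (extn d f))) =1 fun r => if r == i then z else f r.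
Proof.
move=> r; rewrite /tup /insn /deln /extn.
case: (ltnP r i) => Hri.
  have -> : (r == i) = false by apply/eqP => E; rewrite E ltnn in Hri.
  case: insubP => [s _ Hs|Hn]; first by congr f; apply: val_inj.
  by rewrite ltn_ord in Hn.
case: (eqVneq r i) => [->|ne]; first by rewrite !eqxx.
have ne' : (nat_of_ord r == i) = false by apply/negbTE.
rewrite ne'.
have Hlt : (i < r)%N by rewrite ltn_neqAle Hri andbT eq_sym.
have h0 : (0 < r)%N by exact: leq_ltn_trans (leq0n _) Hlt.
have -> : (r.-1 < i)%N = false by rewrite ltnNge -ltnS prednK // Hlt.
rewrite prednK //.
case: insubP => [s _ Hs|Hn]; first by congr f; apply: val_inj.
by rewrite ltn_ord in Hn.
Qed.

Lemma tup_insn_extn_other n (j : 'I_n) (z d : T) (g : 'I_(n.-1) -> T) (r : 'I_n) :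
  r != j -> exists s, @tup n _ (insn j z (extn d g)) r = g s.
Proof.
move=> ne; rewrite /tup /insn /extn.
have jn : (j < n)%N := ltn_ord j.
have rn : (r < n)%N := ltn_ord r.
case: (ltnP r j) => Hrj.
  case: insubP => [s _ Hs|Hn]; first by exists s.
  exfalso; move/negP: Hn; apply; rewrite -ltnS prednK; first exact: leq_ltn_trans Hrj jn.
  exact: leq_ltn_trans (leq0n _) rn.
have -> : (nat_of_ord r == j) = false by apply/negbTE.
have Hlt : (j < r)%N by rewrite ltn_neqAle Hrj andbT eq_sym.
have h0 : (0 < r)%N by exact: leq_ltn_trans (leq0n _) Hlt.
case: insubP => [s _ Hs|Hn]; first by exists s.
exfalso; move/negP: Hn; apply; rewrite -ltnS !prednK //.
exact: leq_ltn_trans (leq0n _) rn.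
Qed.

Lemma ncons1 n (o0 : 'I_n) (h0 : val o0 = 0%N) (d a : T) (f : 'I_n -> T) :
  a = f o0 -> @tup n _ (Defs.ncons a (extn d (fun t => f (lift o0 t)))) =1 f.
Proof.
move=> -> r; rewrite /tup /Defs.ncons /extn.
case E: (nat_of_ord r) => [|r'].
  by congr f; apply: val_inj; rewrite /= h0 E.
case: insubP => [s _ Hs|Hn].
  by congr f; apply: val_inj => /=; rewrite /bump h0 Hs E.
exfalso; move/negP: Hn; apply; have := ltn_ord r; rewrite E.
by case: (n) => //= m; rewrite ltnS.
Qed.

Lemma ncons2 n (o0 o1 : 'I_n) (h0 : val o0 = 0%N) (h1 : val o1 = 1%N)
   (kk : 'I_(n.-1)) (hk : val kk = 0%N) (d d' a b : T) (f : 'I_n -> T) :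
  a = f o0 -> b = f o1 ->
  @tup n _ (Defs.ncons a (Defs.ncons b (deln kk (extn d
      (fun t => if t == kk then d' else f (lift o0 t)))))) =1 f.
Proof.
move=> -> -> r; rewrite /tup /Defs.ncons /deln /extn.
case E: (nat_of_ord r) => [|[|r']].
- by congr f; apply: val_inj; rewrite /= h0 E.
- by congr f; apply: val_inj; rewrite /= h1 E.
rewrite hk /=.
case: insubP => [s _ Hs|Hn].
  have -> : (s == kk) = false by apply/eqP => Es; move: Hs; rewrite Es hk.
  by congr f; apply: val_inj => /=; rewrite /bump h0 Hs E.
exfalso; move/negP: Hn; apply; have := ltn_ord r; rewrite E.
by case: (n) => //= m; rewrite ltnS.
Qed.

End Ord.

Section Main.
Variables (F : fieldType) (G : zmodType) (L : lmodType F) (n : nat)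
  (Lg : G -> L -> Prop) (mu : ('I_n -> L) -> L) (I : eqType)
  (V W : L -> Prop) (e : I -> L).
Hypothesis hn : (2 <= n)%N.
Hypothesis Hml : multilinear mu.
Hypothesis Hgp : graded_product Lg mu.
Hypothesis Hgr : forall g, subspace (Lg g).
Hypothesis gV : graded_subspace Lg V.
Hypothesis gW : graded_subspace Lg W.
Hypothesis Hdec : forall x, exists v w, V v /\ W w /\ x = v + w.
Hypothesis HVW : forall x, V x -> W x -> x = 0.
Hypothesis Hhom : forall i, homogeneous Lg (e i).
Hypothesis HWspan : forall x, W x <-> in_span (fun z => exists i, z = e i) x.
Hypothesis Hind : forall s : seq I, uniq s -> forall c : I -> F,
      \sum_(i <- s) c i *: e i = 0 -> forall i, i \in s -> c i = 0.
Hypothesis H1 : forall ix : 'I_n -> I,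
  (exists j, line e j (mu (e \o ix))) \/ V (mu (e \o ix)).
Hypothesis H2 : forall k : nat, (0 < k < n)%N -> forall (ix : 'I_n -> I) (s : 'S_n),
      exists j, forall z,
        prodset mu (fun r => if (r < k)%N then (fun z => z = e (ix r)) else V) s z ->
        line e j z.
Variable eps : G -> G -> F.
Variable alpha : 'I_n -> 'I_n -> 'I_n -> 'S_n -> 'S_(n.-1) -> F.
Hypothesis Hid : color_gLt_identity Lg eps mu alpha.
Variable i0 : I.

Let Cn j := connected mu V e i0 j.
Let J := Jcls mu V e i0.
Let o0 : 'I_n := @Ordinal n 0 (leq_trans (isT : (0 < 2)%N) hn).
Let o1 : 'I_n := @Ordinal n 1 hn.
Let kk0 : (0 < n.-1)%N. Proof. by case: (n) hn => [|[|m]]. Qed.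
Let kk : 'I_(n.-1) := @Ordinal n.-1 0 kk0.

Lemma Vsub : subspace V. Proof. by case: gV. Qed.
Lemma Wsub : subspace W. Proof. by case: gW. Qed.
Lemma eW m : W (e m). Proof. by apply/HWspan; apply: span_sub; exists m. Qed.
Lemma lineW r z : line e r z -> W z.
Proof. by move=> [c ->]; apply: subspaceZ Wsub (eW r). Qed.

Lemma e_neq0 m : e m != 0.
Proof.
apply/eqP => E; have := @Hind [:: m] isT (fun _ => 1%R).
rewrite big_seq1 scale1r E => /(_ erefl m (mem_head _ _)) /eqP.
by rewrite oner_eq0.
Qed.

Definition Lab (w : 'I_n -> L) (js : 'I_n -> option I) := forall r, uset V e (js r) (w r).

Lemma mem_prodset w js : Lab w js -> prodset mu (fun r => uset V e (js r)) 1%g (mu w).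
Proof.
move=> Hl; apply: span_sub; exists w; split => //; congr mu.
by apply: functional_extensionality => p; rewrite perm1.
Qed.

Lemma KEY1 w js ix : Lab w js -> (forall r, js r = Some (ix r)) ->
  (exists r, forall z, prodset mu (fun r => uset V e (js r)) 1%g z -> line e r z) \/
  (forall z, prodset mu (fun r => uset V e (js r)) 1%g z -> V z).
Proof.
move=> Hl Hjs.
have Hx : forall x, (forall r, uset V e (js r) (x r)) ->
    mu (fun p => x ((1%g : 'S_n) p)) = mu (e \o ix).
  move=> x Hx; congr mu; apply: functional_extensionality => p; rewrite perm1 /=.
  by have := Hx p; rewrite Hjs.
case: (H1 ix) => [[j Hj]|HV]; [left; exists j|right] => z Hz.
- apply: (span_closed (line_subspace e j)); apply: span_mono Hz => y [x [Hxx ->]].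
  by rewrite Hx.
- apply: (span_closed Vsub); apply: span_mono Hz => y [x [Hxx ->]].
  by rewrite Hx.
Qed.

Lemma KEY2 w js r1 r2 m : Lab w js -> js r1 = None -> js r2 = Some m ->
  exists r, forall z, prodset mu (fun r => uset V e (js r)) 1%g z -> line e r z.
Proof.
move=> Hl h1 h2.
pose P := fun p : 'I_n => js p != None.
pose l1 := [seq p <- enum 'I_n | P p].
pose l2 := [seq p <- enum 'I_n | predC P p].
have pl : perm_eq (l1 ++ l2) (enum 'I_n) by rewrite perm_filterC perm_refl.
have ul : uniq (l1 ++ l2) by rewrite (perm_uniq pl) enum_uniq.
have sl : size (l1 ++ l2) = n by rewrite (perm_size pl) size_enum_ord.
have hsz : (size l1 + size l2)%N = n by rewrite -size_cat.
have [s Hs] := perm_of_seq ul sl.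
have r2l1 : r2 \in l1 by rewrite mem_filter /P h2 mem_enum.
have r1l2 : r1 \in l2 by rewrite mem_filter /= /P h1 mem_enum.
have k0 : (0 < size l1)%N by rewrite -has_predT; apply/hasP; exists r2.
have kn : (size l1 < n)%N.
  rewrite -[n in (_ < n)%N]hsz -{1}(addn0 (size l1)) ltn_add2l; by case: (l2) r1l2.
pose ix := fun r => odflt m (js (s r)).
have EA : (fun r => uset V e (js (s r))) =
          (fun r : 'I_n => if (r < size l1)%N then (fun z => z = e (ix r)) else V).
  apply: functional_extensionality => r; rewrite /ix Hs nth_cat.
  case: ltnP => hr.
  - have : nth r l1 r \in l1 by apply: mem_nth.
    rewrite mem_filter /P => /andP [hs _].
    by case: (js (nth r l1 r)) hs.
  - have : nth r l2 (r - size l1) \in l2.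
      apply: mem_nth; rewrite -(ltn_add2l (size l1)) subnKC // hsz; exact: ltn_ord.
    by rewrite mem_filter /= /P negbK => /andP [/eqP -> _].
have [j Hj] := H2 (k := size l1) (ltac:(by rewrite k0 kn)) ix (s^-1)%g.
exists j => z /(prodset_perm_iff _ _ s _) Hz; apply: Hj; by rewrite -EA.
Qed.

Lemma ext_conn m b X r : Cn m -> muI mu V e (b, Some m) X (Some r) -> Cn r.
Proof.
rewrite /Cn /connected => Hm Hmu.
case: (eqVneq i0 r) => [->|ne]; first by left.
right; split; first by apply/eqP.
case: Hm => [Em|[_ [b0 [Xs [hs [hmid hlast]]]]]].
- exists b, [:: X]; split => //; split; first by move=> m' /andP [h1 h2]; case: m' h1 h2.
  by exists (b, i0); split => //=; rewrite Em.
- exists b0, (rcons Xs X); split; first by rewrite size_rcons.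
  split.
  + move=> m' /andP [h1 h2]; rewrite size_rcons ltnS leq_eqVlt in h2.
    case/orP: h2 => [/eqP ->|h2].
      by rewrite -cats1 takel_cat // take_size; exists (false, m).
    rewrite -cats1 takel_cat; last exact: ltnW.
    by apply: hmid; rewrite h1.
  + rewrite /phis foldl_rcons; exists (b, m); split => //.
    move: hlast hs; rewrite /phis; clear hmid; case/lastP: Xs => [|Xs' X'] //.
    by rewrite !foldl_rcons => h _; exact h.
Qed.

Lemma C1 w js k m r : Lab w js -> js k = Some m -> Cn m -> mu w <> 0 ->
  (forall z, prodset mu (fun r => uset V e (js r)) 1%g z -> line e r z) -> Cn r.
Proof.
move=> Hl hk Hm nz Hr.
pose p := tperm o0 k.
apply: (@ext_conn m false (false, fun t => js (p (lift o0 t)))) => //.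
rewrite /muI /=; exists (p^-1)%g.
have -> : @tup n _ (Defs.ncons (Some m) (extn None (fun t => js (p (lift o0 t)))))
          = (fun r => js (p r)).
  apply: functional_extensionality; apply: ncons1 => //.
  by rewrite /p tpermL.
split.
- exists (mu w); split => //; apply/(prodset_perm_iff _ (fun r => uset V e (js r)) p); exact: mem_prodset.
- by move=> z /(prodset_perm_iff _ (fun r => uset V e (js r)) p z) /Hr.
Qed.

Lemma C2 w js k m r0 m' : Lab w js -> js k = Some m -> Cn m -> mu w <> 0 ->
  (forall z, prodset mu (fun r => uset V e (js r)) 1%g z -> V z) ->
  r0 != k -> js r0 = Some m' -> Cn m'.
Proof.
move=> Hl hk Hm nz HV ne h0.
pose l := r0 :: k :: [seq p <- enum 'I_n | (p != r0) && (p != k)].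
have ul : uniq l.
  rewrite /l /= !inE !mem_filter (negbTE ne) !eqxx /= !andbF /=.
  by rewrite filter_uniq // enum_uniq.
have sl : size l = n.
  have pl : perm_eq l (enum 'I_n).
    apply: uniq_perm => //; first exact: enum_uniq.
    move=> p; rewrite mem_enum /l !inE mem_filter mem_enum andbT.
    by case: (p == r0); case: (p == k).
  by rewrite (perm_size pl) size_enum_ord.
have [s Hs] := perm_of_seq ul sl.
pose X2 := fun t => if t == kk then None else js (s (lift o0 t)).
apply: (@ext_conn m true (false, X2)) => //.
rewrite /muI /=; exists kk, (s^-1)%g.
have E : @tup n _ (Defs.ncons (Some m') (Defs.ncons (Some m) (deln kk (extn None X2))))
          = (fun r => js (s r)).
  apply: functional_extensionality; apply: (@ncons2 _ n o0 o1) => //.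
  - by rewrite Hs.
  - by rewrite Hs.
move=> t; rewrite E /X2 eqxx; split.
- case=> [_ Ht]; case: t Ht => [r|] // Ht; exfalso; apply: nz; apply: HVW.
    by apply: HV; exact: mem_prodset.
  by apply: (lineW (r := r)); apply: Ht; apply/(prodset_perm_iff _ (fun r => uset V e (js r)) s); exact: mem_prodset.
- move=> ->; split.
    by exists (mu w); split => //; apply/(prodset_perm_iff _ (fun r => uset V e (js r)) s); exact: mem_prodset.
  by move=> z /(prodset_perm_iff _ (fun r => uset V e (js r)) s z) /HV.
Qed.

Definition BL z := (exists m, z = e m) \/ (V z /\ homogeneous Lg z).

Lemma ClassA w k j : Cn j -> w k = e j -> (forall r, r != k -> BL (w r)) ->
  (exists r c, Cn r /\ mu w = c *: e r) \/
  (V (mu w) /\ exists iz : 'I_n -> I, (forall r, Cn (iz r)) /\ mu w = mu (e \o iz)).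
Proof.
move=> Hj hk HB.
have [js Hjs] : exists js : 'I_n -> option I,
    forall r, uset V e (js r) (w r) /\ (r = k -> js r = Some j).
  apply: (fchoice (P := fun r o => uset V e o (w r) /\ (r = k -> o = Some j))) => r.
  case: (eqVneq r k) => [->|ne].
    by exists (Some j); split.
  case: (HB r ne) => [[m' ->]|[hV _]]; [exists (Some m') | exists None]; split => // E;
    by rewrite E eqxx in ne.
have Hl : Lab w js by move=> r; case: (Hjs r).
have hjk : js k = Some j by case: (Hjs k) => _ ->.
case: (classic (mu w = 0)) => [z0|nz].
  by left; exists j, 0; rewrite z0 scale0r.
case: (classic (exists r, js r = None)) => [[r1 h1]|hN].
- have [r' Hr'] := KEY2 Hl h1 hjk.
  left; exists r'; have [c Hc] := Hr' _ (mem_prodset Hl); exists c; split => //.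
  exact: C1 Hl hjk Hj nz Hr'.
- pose ix := fun r => odflt j (js r).
  have Hix : forall r, js r = Some (ix r).
    move=> r; rewrite /ix; case E: (js r) => [a|] //; exfalso; apply: hN; by exists r.
  case: (KEY1 Hl Hix) => [[r' Hr']|HV].
  + left; exists r'; have [c Hc] := Hr' _ (mem_prodset Hl); exists c; split => //.
    exact: C1 Hl hjk Hj nz Hr'.
  + right; split; first exact: HV _ (mem_prodset Hl).
    exists ix; split.
    * move=> r; case: (eqVneq r k) => [->|ne].
        by have := Hix k; rewrite hjk => -[<-].
      exact: C2 Hl hjk Hj nz HV ne (Hix r).
    * congr mu; apply: functional_extensionality => p.
      by have := Hl p; rewrite Hix => ->.
Qed.

Lemma Vcls_sub : subspace (Vcls mu V e i0).
Proof. exact: subspace_inter (span_subspace _) Vsub. Qed.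

Lemma Wcls_sub : subspace (Wcls mu V e i0).
Proof. exact: span_subspace. Qed.

Lemma J_sub : subspace J.
Proof.
split.
  exists 0, 0; split; first by case: Vcls_sub.
  by split; [case: Wcls_sub | rewrite addr0].
move=> a x y [v [w [hv [hw ->]]]] [v' [w' [hv' [hw' ->]]]].
exists (a *: v + v'), (a *: w + w'); split; first by case: Vcls_sub => _; apply.
split; first by case: Wcls_sub => _; apply.
by rewrite scalerDr addrACA.
Qed.

Lemma VclsJ z : Vcls mu V e i0 z -> J z.
Proof. by move=> h; exists z, 0; split => //; split; [case: Wcls_sub | rewrite addr0]. Qed.

Lemma WclsJ z : Wcls mu V e i0 z -> J z.
Proof. by move=> h; exists 0, z; split; [case: Vcls_sub | split => //; rewrite add0r]. Qed.

Lemma lineJ r c : Cn r -> J (c *: e r).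
Proof.
move=> Cr; apply: WclsJ; apply: subspaceZ Wcls_sub _.
by apply: span_sub; exists r.
Qed.

Lemma prodVJ ix : (forall r, Cn (ix r)) -> V (mu (e \o ix)) -> J (mu (e \o ix)).
Proof. by move=> Hix hV; apply: VclsJ; split => //; apply: span_sub; exists ix. Qed.

Lemma ClassA_J w k j : Cn j -> w k = e j -> (forall r, r != k -> BL (w r)) -> J (mu w).
Proof.
move=> Hj hk HB; case: (ClassA Hj hk HB) => [[r [c [Cr ->]]]|[hV [iz [Hiz E]]]].
  exact: lineJ.
by rewrite E; apply: prodVJ => //; rewrite -E.
Qed.

Lemma ClassOuter w k : V (w k) -> (forall r, r != k -> exists m, Cn m /\ w r = e m) ->
  J (mu w).
Proof.
move=> hV HB.
have [ms Hms] : exists ms : 'I_n -> I, forall r, r != k -> Cn (ms r) /\ w r = e (ms r).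
  apply: (fchoice (P := fun r m => r != k -> Cn m /\ w r = e m)) => r.
  case: (eqVneq r k) => [->|ne]; first by exists i0.
  by have [m Hm] := HB r ne; exists m.
pose js := fun r => if r == k then None else Some (ms r).
have Hl : Lab w js.
  move=> r; rewrite /js; case: (eqVneq r k) => [->|ne] //.
  by case: (Hms r ne).
case: (classic (mu w = 0)) => [->|nz]; first by case: J_sub.
pose r0 := if k == o0 then o1 else o0.
have ner : r0 != k.
  rewrite /r0; case: (eqVneq k o0) => [->|ne]; last by rewrite eq_sym.
  by rewrite -val_eqE.
have h0 : js r0 = Some (ms r0) by rewrite /js (negbTE ner).
have hk : js k = None by rewrite /js eqxx.
have [r Hr] := KEY2 Hl hk h0.
have Cr := C1 Hl h0 (proj1 (Hms r0 ner)) nz Hr.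
have [c ->] := Hr _ (mem_prodset Hl).
exact: lineJ.
Qed.

Lemma TermJ (ix : 'I_n -> I) (y : 'I_(n.-1) -> L) (i' j' : 'I_n) (s1 : 'S_n)
    (s2 : 'S_(n.-1)) :
  (forall r, Cn (ix r)) -> (forall s, BL (y s)) ->
  J (mu (@tup n _ (insn i' (mu (@tup n _ (insn j' ((e \o ix) (s1 i')) (extn 0 (y \o s2)))))
           (deln i' (extn 0 ((e \o ix) \o s1)))))).
Proof.
move=> Hix HBy.
set inner := mu (@tup n _ (insn j' _ _)).
have Eo : @tup n _ (insn i' inner (deln i' (extn 0 ((e \o ix) \o s1))))
          = upd (fun r => e (ix (s1 r))) i' inner.
  by apply: functional_extensionality => r; rewrite tup_insn_deln_extn.
rewrite Eo.
have CA := @ClassA (@tup n _ (insn j' ((e \o ix) (s1 i')) (extn 0 (y \o s2)))) j'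
   (ix (s1 i')) (Hix _).
case: CA.
- by rewrite /tup /insn ltnn eqxx.
- move=> r ne; have [s ->] := tup_insn_extn_other ((e \o ix) (s1 i')) 0 (y \o s2) ne.
  exact: HBy.
- move=> [r [c [Cr Ec]]]; rewrite /inner Ec (muZ Hml); apply: subspaceZ J_sub _.
  apply: (@ClassA_J _ i' r Cr); first by rewrite /upd eqxx.
  by move=> r' ne; rewrite /upd (negbTE ne); left; exists (ix (s1 r')).
- move=> [hV _]; apply: (@ClassOuter _ i'); first by rewrite /upd eqxx.
  by move=> r' ne; exists (ix (s1 r')); rewrite /upd (negbTE ne); split.
Qed.

Lemma ClaimB w k ix : (forall r, Cn (ix r)) -> w k = mu (e \o ix) ->
  (forall r, r != k -> BL (w r)) -> J (mu w).
Proof.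
move=> Hix hk HB.
pose x := e \o ix.
have [gx Hgx] : exists gx : 'I_n -> G, forall r, Lg (gx r) (x r).
  by apply: (fchoice (P := fun r g => Lg g (x r))) => r; exact: Hhom.
pose y := fun s => w (lift k s).
have HBy : forall s, BL (y s) by move=> s; apply: HB; rewrite eq_sym neq_lift.
have [gy Hgy] : exists gy : 'I_(n.-1) -> G, forall s, Lg (gy s) (y s).
  apply: (fchoice (P := fun s g => Lg g (y s))) => s.
  by case: (HBy s) => [[m ->]|[_ h]]; [exact: Hhom | exact: h].
have Ew : mu w = mu (@tup n _ (insn k (mu x) (extn 0 y))).
  congr mu; apply: functional_extensionality => r; rewrite tup_insn_extn_lift.
  by case: (eqVneq r k) => [->|].
have E := Hid k Hgx Hgy; cbv zeta in E.
rewrite Ew E.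
apply: subspace_sum J_sub _ => i' _; apply: subspace_sum J_sub _ => j' _.
apply: subspace_sum J_sub _ => s1 _; apply: subspace_sum J_sub _ => s2 _.
apply: subspaceZ J_sub _.
exact: TermJ.
Qed.

Definition Pprod z := exists ix : 'I_n -> I, (forall r, Cn (ix r)) /\ z = mu (e \o ix).
Definition Bk z := (exists j, Cn j /\ z = e j) \/ Pprod z.

Lemma MainBk w k : Bk (w k) -> (forall r, r != k -> BL (w r)) -> J (mu w).
Proof.
move=> [[j [Hj hk]]|[ix [Hix hk]]] HB; first exact: ClassA_J Hj hk HB.
exact: ClaimB Hix hk HB.
Qed.

Lemma span_BL z : in_span BL z.
Proof.
have [v [w [hv [hw ->]]]] := Hdec z.
apply: span_add.
- case: gV => _ /(_ v hv) [s [Hs ->]].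
  exists [seq (1%R, p.2) | p <- s]; split.
    move=> p /mapP [q qs ->] /=; right; have [h1 h2] := Hs q qs; split => //.
    by exists q.1.
  by rewrite big_map; apply: eq_bigr => p _ /=; rewrite scale1r.
- move/HWspan: hw; apply: span_mono => y [m ->]; left; by exists m.
Qed.

Lemma J_in_span_Bk z : J z -> in_span Bk z.
Proof.
move=> [v [w [[hv _] [hw ->]]]]; apply: span_add.
  by apply: span_mono hv => y [ix [Hix ->]]; right; exists ix.
by apply: span_mono hw => y [j [Hj ->]]; left; exists j.
Qed.

Lemma idealJ w k : J (w k) -> J (mu w).
Proof.
move=> hk.
apply: (mu_span Hml (B := fun r => if r == k then Bk else BL) J_sub).
- move=> w' Hw'; apply: (@MainBk _ k); first by have := Hw' k; rewrite eqxx.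
  by move=> r ne; have := Hw' r; rewrite (negbTE ne).
- move=> r; case: (eqVneq r k) => [->|ne]; first exact: J_in_span_Bk.
  exact: span_BL.
Qed.

Lemma ideal_prod (s : 'S_n) z :
  prodset mu (fun r => if nat_of_ord r == 0%N then J else (fun _ => True)) s z -> J z.
Proof.
move=> Hz; apply: (span_closed J_sub); apply: span_mono Hz => y [x [Hx ->]].
apply: (@idealJ _ ((s^-1)%g o0)); rewrite permKV.
by have := Hx o0.
Qed.

Lemma split_list (s : seq (F * L)) :
  (forall p, p \in s -> Pprod p.2) ->
  exists (s1 : seq (G * L)) w,
    (forall q, q \in s1 -> Lg q.1 q.2 /\ Vcls mu V e i0 q.2) /\ Wcls mu V e i0 w /\
    \sum_(p <- s) p.1 *: p.2 = \sum_(q <- s1) q.2 + w.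
Proof.
elim: s => [|p s IH] Hs.
  exists [::], 0; split => //; split; first by case: Wcls_sub.
  by rewrite !big_nil addr0.
have [s1 [w [H1s [Hw E]]]] := IH (fun q qs => Hs q ltac:(by rewrite inE qs orbT)).
have [ix [Hix Ep]] := Hs p (mem_head _ _).
have [gx Hgx] : exists gx : 'I_n -> G, forall r, Lg (gx r) ((e \o ix) r).
  by apply: (fchoice (P := fun r g => Lg g ((e \o ix) r))) => r; exact: Hhom.
have Hg := Hgp Hgx.
case: (@ClassA (e \o ix) o0 (ix o0) (Hix _) erefl).
  by move=> r _; left; exists (ix r).
- move=> [r [c [Cr Ec]]]; exists s1, (p.1 *: (c *: e r) + w); split => //; split.
    case: Wcls_sub => _; apply => //; apply: subspaceZ Wcls_sub _.
    by apply: span_sub; exists r.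
  by rewrite big_cons E Ep Ec addrCA.
- move=> [hV _]; exists ((\sum_r gx r, p.1 *: p.2) :: s1), w; split.
    move=> q; rewrite inE => /orP [/eqP -> /=|qs]; last exact: H1s.
    split; first by apply: subspaceZ (Hgr _) _; rewrite Ep.
    split; first by apply: subspaceZ (span_subspace _) _; apply: span_sub; exists ix.
    by apply: subspaceZ Vsub _; rewrite Ep.
  by split => //; rewrite !big_cons /= E addrA.
Qed.

Lemma Vcls_graded : graded_subspace Lg (Vcls mu V e i0).
Proof.
split; first exact: Vcls_sub.
move=> x [[s [Hs Ex]] hV].
have [s1 [w [H1s [Hw E]]]] := split_list Hs.
have Vs1 : V (\sum_(q <- s1) q.2).
  by rewrite big_seq; apply: subspace_sum Vsub _ => q qs; case: (H1s q qs) => _ [].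
have w0 : w = 0.
  apply: HVW.
  - have -> : w = x - \sum_(q <- s1) q.2 by rewrite Ex E addrC addKr.
    exact: subspaceB Vsub hV Vs1.
  - apply/HWspan; apply: span_mono Hw => y [j [_ ->]]; by exists j.
by exists s1; split => //; rewrite Ex E w0 addr0.
Qed.

Lemma Wcls_graded : graded_subspace Lg (Wcls mu V e i0).
Proof.
split; first exact: Wcls_sub.
move=> x [s [Hs ->]]; elim: s Hs => [|p s IH] Hs.
  by exists [::]; rewrite !big_nil.
have [s1 [Hs1 E]] := IH (fun q qs => Hs q ltac:(by rewrite inE qs orbT)).
have [j [Cj Ep]] := Hs p (mem_head _ _).
have [g Hg] := Hhom j.
exists ((g, p.1 *: p.2) :: s1); split.
  move=> q; rewrite inE => /orP [/eqP -> /=|qs]; last exact: Hs1.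
  split; first by rewrite Ep; apply: subspaceZ (Hgr g) Hg.
  by apply: subspaceZ (span_subspace _) _; apply: span_sub; exists j.
by rewrite !big_cons E.
Qed.

Lemma J_graded : graded_subspace Lg J.
Proof.
split; first exact: J_sub.
move=> x [v [w [hv [hw ->]]]].
have [_ Hv] := Vcls_graded; have [_ Hw] := Wcls_graded.
have [s1 [Hv1 ->]] := Hv v hv; have [s2 [Hv2 ->]] := Hw w hw.
exists (s1 ++ s2); split; last by rewrite big_cat.
move=> q; rewrite mem_cat => /orP [qs|qs].
  by have [? ?] := Hv1 q qs; split => //; apply: VclsJ.
by have [? ?] := Hv2 q qs; split => //; apply: WclsJ.
Qed.

End Main.

Theorem proposition3p8 (F : fieldType) (G : zmodType) (L : lmodType F) (n : nat)
    (eps : G -> G -> F) (Lg : G -> L -> Prop) (mu : ('I_n -> L) -> L)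
    (I : eqType) (V W : L -> Prop) (e : I -> L) :
  (2 <= n)%N ->
  bicharacter eps ->
  grading Lg ->
  multilinear mu ->
  graded_product Lg mu ->
  color_gLt Lg eps mu ->
  quasi_mult_basis Lg mu V W e ->
  forall i : I,
    gLt_ideal Lg mu (Jcls mu V e i) /\ inherited_qmb Lg V W e (Jcls mu V e i).
Proof.
move=> hn _ [Hgr _] Hml Hgp [alpha Hid]
  [gV [gW [Hdec [HVW [_ [Hhom [HWspan [Hind [H1 [H2 _]]]]]]]]]] i.
split.
- split; first exact: (J_graded hn Hgp Hgr gV gW HVW Hhom HWspan H1 H2).
  move=> s z; exact: (ideal_prod hn Hml gV gW Hdec HVW Hhom HWspan H1 H2 Hid).
- exists (Vcls mu V e i), (Wcls mu V e i), (connected mu V e i).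
  split; first exact: (Vcls_graded hn Hgp Hgr gV gW HVW Hhom HWspan H1 H2).
  split; first by move=> x [].
  split; first exact: (Wcls_graded mu V Hgr Hhom).
  have WclsW : forall x, Wcls mu V e i x -> W x.
    by move=> x Hx; apply/HWspan; apply: span_mono Hx => y [j [_ ->]]; exists j.
  split; first exact: WclsW.
  split.
    exists (e i); split; last exact/eqP/(e_neq0 Hind).
    by apply: span_sub; exists i; split => //; left.
  split; first by [].
  split; first by [].
  by move=> x [_ hV] hW; apply: HVW hV (WclsW _ hW).
Qed.
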